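(* Let $G=(V,E)$ be an undirected graph with distinct vertices $s,d$, with one Boolean variable $X_e$ per edge $e\in E$. Let $\mathcal{P}$ be a PSDD normalized for a right-linear vtree whose underlying Boolean function has as models exactly the edge-indicator assignments of simple paths from $s$ to $d$ in $G$, parameterized so that every such simple path has positive probability. When a path is sampled top-down from $\mathcal{P}$ (at each reached decision node select an element $(p_i,s_i)$ with probability $\theta_i$, take the prime $p_i$, and recurse into $s_i$), no prime encountered is the constant $\top$; i.e., every encountered prime is a literal $X_e$ or $\neg X_e$.
   Context: A vtree over a set of Boolean variables is a full binary tree whose leaves are in bijection with the variables; it is right-linear if the left child of every internal node is a leaf. An SDD has terminal nodes (a literal, $\top$ or $\bot$) and decision nodes $\{(p_1,s_1),\dots,(p_n,s_n)\}$ representing $\bigvee_i(p_i\wedge s_i)$ with primes consistent, mutually exclusive and exhaustive; a node is normalized for a vtree node $v$ if terminals sit at leaves containing their variable, and decision nodes have primes normalized for the left child and subs for the right child of $v$, the root being normalized for the vtree root. A PSDD attaches to each decision node parameters $\theta_i\ge0$ summing to $1$ with $\theta_i=0$ iff $s_i=\bot$, and to each $\top$ terminal a parameter in $(0,1)$. *)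

(* Defs.v *)
From HB Require Import structures.
From mathcomp Require Import all_boot all_order all_algebra.
From Stdlib Require List.
Set Implicit Arguments. Unset Strict Implicit. Unset Printing Implicit Defensive.
Import Order.TTheory GRing.Theory Num.Theory.
Local Open Scope ring_scope.

(* A graph on vertex type V with edge type Ed; [ends e] is the set of the two
   endpoints of edge e.  Simplicity (no loops, no parallel edges) is imposed as
   hypotheses in the theorem. *)
Section Graph.
Variables (V Ed : finType) (ends : Ed -> {set V}).

Definition adjacent (x y : V) : bool := [exists e, ends e == [set x; y]].

Definition simple_path (s d : V) (p : seq V) : bool :=
  [&& uniq (s :: p), last s p == d
    & all (fun xy => adjacent xy.1 xy.2) (zip (s :: p) p)].

Definition path_edges (s : V) (p : seq V) : {set Ed} :=
  [set e | has (fun xy => ends e == [set xy.1; xy.2]) (zip (s :: p) p)].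

Definition is_path_indicator (s d : V) (a : Ed -> bool) : Prop :=
  exists p : seq V, simple_path s d p /\ forall e, a e = (e \in path_edges s p).
End Graph.

Inductive vtree (X : Type) : Type :=
| VLeaf of X
| VNode of vtree X & vtree X.
Arguments VLeaf {X}. Arguments VNode {X}.

Fixpoint vleaves (X : Type) (v : vtree X) : seq X :=
  match v with VLeaf x => [:: x] | VNode l r => vleaves l ++ vleaves r end.

Fixpoint right_linear (X : Type) (v : vtree X) : bool :=
  match v with
  | VLeaf _ => true
  | VNode l r => (if l is VLeaf _ then true else false) && right_linear r
  end.

Definition vtree_over (X : finType) (v : vtree X) : bool :=
  uniq (vleaves v) && all (fun x => x \in vleaves v) (enum X).

(* ---------- (P)SDDs, as trees (sharing unfolded) ---------- *)
(* PLit x b : literal X (b = true) or ~X (b = false);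
   PTop x th : the constant T sitting at the leaf of variable x, with parameter th;
   PBot : the constant _|_ ;
   PDec es : decision node, elements (prime, sub, theta). *)
Inductive psdd (X R : Type) : Type :=
| PLit of X & bool
| PTop of X & R
| PBot
| PDec of seq (psdd X R * psdd X R * R).
Arguments PLit {X R}. Arguments PTop {X R}. Arguments PBot {X R}. Arguments PDec {X R}.

Fixpoint peval (X : eqType) (R : Type) (a : X -> bool) (n : psdd X R) {struct n} : bool :=
  match n with
  | PLit x b => a x == b
  | PTop _ _ => true
  | PBot => false
  | PDec es =>
      (fix ev (l : seq (psdd X R * psdd X R * R)) : bool :=
         match l with
         | [::] => false
         | (p, s, _) :: l' => (peval a p && peval a s) || ev l'
         end) es
  end.

Fixpoint pprob (X : eqType) (R : pzRingType) (a : X -> bool) (n : psdd X R) {struct n} : R :=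
  match n with
  | PLit x b => if a x == b then 1 else 0
  | PTop x th => if a x then th else 1 - th
  | PBot => 0
  | PDec es =>
      (fix pr (l : seq (psdd X R * psdd X R * R)) : R :=
         match l with
         | [::] => 0
         | (p, s, th) :: l' => th * pprob a p * pprob a s + pr l'
         end) es
  end.

Definition dec_ok (X : eqType) (R : numDomainType)
    (es : seq (psdd X R * psdd X R * R)) : Prop :=
  [/\ (forall t, List.In t es -> exists a : X -> bool, peval a t.1.1),
      (forall i j, (i < size es)%N -> (j < size es)%N -> i <> j ->
         forall a : X -> bool,
           ~~ (peval a (nth (PBot, PBot, 0) es i).1.1
               && peval a (nth (PBot, PBot, 0) es j).1.1))
    & (forall a : X -> bool, exists2 t, List.In t es & peval a t.1.1)] /\
  [/\ (forall t, List.In t es -> 0 <= t.2),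
      \sum_(t <- es) t.2 = 1
    & (forall t, List.In t es -> (t.2 = 0 <-> t.1.2 = PBot))].

Inductive psdd_ok (X : eqType) (R : numDomainType) : vtree X -> psdd X R -> Prop :=
| ok_lit x b : psdd_ok (VLeaf x) (PLit x b)
| ok_top x th : 0 < th -> th < 1 -> psdd_ok (VLeaf x) (PTop x th)
| ok_bot v : psdd_ok v PBot
| ok_dec l r es :
    (forall t, List.In t es -> psdd_ok l t.1.1 /\ psdd_ok r t.1.2) ->
    dec_ok es -> psdd_ok (VNode l r) (PDec es).

(* nodes reached with positive probability by top-down sampling from root *)
Inductive reached (X R : Type) (lt0 : R -> Prop) (root : psdd X R) : psdd X R -> Prop :=
| reached_root : reached lt0 root root
| reached_step es p s th :
    reached lt0 root (PDec es) -> List.In (p, s, th) es -> lt0 th -> reached lt0 root s.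

Definition sreached (X : Type) (R : numDomainType) (root n : psdd X R) : Prop :=
  reached (fun th : R => 0 < th) root n.

(* Main.v *)
Require Import Defs.
From HB Require Import structures.
From mathcomp Require Import all_boot all_order all_algebra.
Import Order.TTheory GRing.Theory Num.Theory.
Set Implicit Arguments.
Local Open Scope ring_scope.

Lemma mem_zip2 (T U : eqType) (s : seq T) (t : seq U) y z :
  (y, z) \in zip s t -> y \in s /\ z \in t.
Proof.
elim: s t => [|a s IH] [|b t] //=.
rewrite !in_cons => /orP[/eqP[-> ->]|/IH[h1 h2]]; first by rewrite !eqxx.
by rewrite h1 h2 !orbT.
Qed.

Section G.
Variables (V Ed : finType) (ends : Ed -> {set V}).
Hypothesis inj : injective ends.

Definition deg (A : {set Ed}) (w : V) : nat := (\sum_(e in A) (w \in ends e))%N.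

Lemma path_par s d p w : simple_path ends s d p ->
  odd (deg (path_edges ends s p) w) = (w == s) (+) (w == d).
Proof.
elim: p s => [|x p IH] s.
  rewrite /simple_path /= andbT => /eqP <-.
  rewrite /deg big1 ?addbb // => e; rewrite /path_edges inE.
  by [].
rewrite /simple_path /= => /and3P[/andP[sn ux] ld /andP[adj al]].
have sp : simple_path ends x d p by apply/and3P.
have [e0 He0] := existsP adj.
have E : path_edges ends s (x :: p) = e0 |: path_edges ends x p.
  apply/setP => e; rewrite !inE /=; congr (_ || _).
  apply/eqP/eqP => [h|->]; last exact/eqP.
  by apply: inj; rewrite h (eqP He0).
have Nin : e0 \notin path_edges ends x p.
  rewrite inE; apply/hasPn => [[y z]] Hyz /=; apply/negP => /eqP h.
  have := @mem_zip2 _ _ _ _ _ _ Hyz => -[hy hz].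
  have : s \in ends e0 by rewrite (eqP He0) !inE eqxx.
  rewrite h !inE => /orP[/eqP hs|/eqP hs]; move: sn; rewrite hs.
    by rewrite hy.
  by rewrite in_cons hz orbT.
rewrite E /deg big_setU1 //= oddD oddb -/(deg _ w) (IH _ sp) (eqP He0) !inE.
have sx : s != x by apply: contraNneq sn => ->; rewrite mem_head.
case: (w =P s) => [->|_] /=; first by rewrite (negbTE sx).
by case: (w == x); case: (w == d).
Qed.

Lemma no_flip s d (a1 a0 : Ed -> bool) x : #|ends x| = 2%N ->
  is_path_indicator ends s d a1 -> is_path_indicator ends s d a0 ->
  a1 x -> ~~ a0 x -> (forall y, y != x -> a1 y = a0 y) -> False.
Proof.
move=> c2 [p1 [sp1 H1]] [p0 [sp0 H0]] a1x a0x Hy.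
have : (0 < #|ends x|)%N by rewrite c2.
case/card_gt0P => u uin.
have E : path_edges ends s p1 = x |: path_edges ends s p0.
  apply/setP => y; rewrite in_setU1 -H1 -H0.
  by case: (eqVneq y x) => [->|ne] /=; [rewrite a1x | rewrite Hy].
have Nin : x \notin path_edges ends s p0 by rewrite -H0.
have := path_par s d p1 u sp1; have := path_par s d p0 u sp0.
rewrite E /deg big_setU1 //= uin oddD /= -/(deg _ u) => ->.
by case: (_ (+) _).
Qed.
End G.
Section P.
Variables (R : numDomainType) (X : eqType).

Lemma peval_dec (a : X -> bool) (es : seq (psdd X R * psdd X R * R)) :
  peval a (PDec es) = has (fun t => peval a t.1.1 && peval a t.1.2) es.
Proof. by elim: es => [|[[p s] th] es IH] //=; rewrite -IH. Qed.

Lemma In_has (T : Type) (f : T -> bool) t es : List.In t es -> f t -> has f es.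
Proof.
elim: es => [|t' es IH] //= [->->//|/IH h ft]; by rewrite h ?orbT.
Qed.

Lemma peval_loc (w : vtree X) (n : psdd X R) a b : psdd_ok w n ->
  (forall y, y \in vleaves w -> a y = b y) -> peval a n = peval b n.
Proof.
elim: w n => [x|l IHl r IHr] n ok H; inversion ok; subst => //=.
  by rewrite H // mem_seq1.
change (peval a (PDec es) = peval b (PDec es)); rewrite !peval_dec.
elim: es H2 {ok H4} => [|[[p s] th] es IHes] Hch //=.
have [okp oks] := Hch _ (or_introl erefl).
rewrite (IHl _ okp) ?(IHr _ oks) ?IHes // => [t ht|y yin|y yin].
- by apply: Hch; right.
- by apply: H; rewrite /= mem_cat yin orbT.
- by apply: H; rewrite /= mem_cat yin.
Qed.

Lemma sum_nz (T : Type) (f : T -> R) (es : seq T) :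
  \sum_(t <- es) f t != 0 -> exists t, List.In t es /\ f t != 0.
Proof.
elim: es => [|t es IH]; first by rewrite big_nil eqxx.
rewrite big_cons; have [h0|hn] := eqVneq (f t) 0.
  by rewrite h0 add0r => /IH[t' [h1 h2]]; exists t'; split => //; right.
by move=> _; exists t; split => //; left.
Qed.

Lemma disj (l r : vtree X) y : uniq (vleaves (VNode l r)) ->
  y \in vleaves r -> y \notin vleaves l.
Proof.
rewrite /= cat_uniq => /and3P[_ /hasPn h _] yr; exact: h.
Qed.

Lemma psdd_sat (w : vtree X) (n : psdd X R) : psdd_ok w n -> uniq (vleaves w) ->
  n <> PBot -> exists a, peval a n.
Proof.
elim: w n => [x|l IHl r IHr] n ok un nb; inversion ok; subst => //=.
- by exists (fun _ => b); rewrite eqxx.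
- by exists (fun _ => true).
move: un; rewrite /= cat_uniq => /and3P[ul /hasPn dj ur].
case: H3 => [[Hcons _ _] [_ Hsum Hz]].
have [t [Ht tn]] : exists t, List.In t es /\ t.2 != 0.
  by apply: sum_nz; rewrite Hsum oner_neq0.
have [okp oks] := H1 _ Ht.
have sb : t.1.2 <> PBot by move=> h; move: tn; rewrite (proj2 (Hz _ Ht) h) eqxx.
have [a1 h1] := IHr _ oks ur sb.
have [a0 h0] := Hcons _ Ht.
exists (fun y => if y \in vleaves l then a0 y else a1 y).
change (peval (fun y => if y \in vleaves l then a0 y else a1 y) (PDec es)).
rewrite peval_dec; eapply In_has; [exact Ht|]; apply/andP; split.
  by rewrite (peval_loc _ a0 okp) // => y ->.
rewrite (peval_loc _ a1 oks) // => y yr; by rewrite (negbTE (dj _ yr)).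
Qed.
End P.

Lemma reach_ctx (R : numDomainType) (X : eqType) (vt : vtree X) (P n : psdd X R) :
  psdd_ok vt P -> uniq (vleaves vt) -> right_linear vt -> (forall y, y \in vleaves vt) ->
  sreached P n -> exists w (c : X -> bool), [/\ psdd_ok w n, uniq (vleaves w), right_linear w &
     forall b, peval b n -> peval (fun y => if y \in vleaves w then b y else c y) P].
Proof.
move=> okP uP rlP allP; elim => [|es p s th _ [w [c [okw uw rlw Hw]]] Hin th0].
  exists vt, (fun _ => true); split => // b hb.
  by rewrite (peval_loc _ b okP) // => y ->.
inversion okw; subst.
match goal with H : dec_ok _ |- _ => rename H into Hdec end.
match goal with H : forall t, List.In t _ -> psdd_ok _ _ /\ _ |- _ => rename H into Hch end.
move: (uw); rewrite /= cat_uniq => /and3P[ul /hasPn dj ur].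
have [okp oks] := Hch _ Hin.
case: Hdec => [[Hcons _ _] _].
have [a0 h0] := Hcons _ Hin.
exists r, (fun y => if y \in vleaves l then a0 y else c y); split => //.
  by move: rlw => /= /andP[].
move=> b hb.
set b2 := fun y => if y \in vleaves l then a0 y else b y.
have hb2 : peval b2 (PDec es).
  rewrite peval_dec; eapply In_has; [exact Hin|]; apply/andP; split => /=.
    by rewrite (peval_loc _ a0 okp) // => y; rewrite /b2 => ->.
  rewrite (peval_loc _ b oks) // => y yr; by rewrite /b2 (negbTE (dj _ yr)).
have := Hw _ hb2.
rewrite (peval_loc _ (fun y => if y \in vleaves r then b y else
           if y \in vleaves l then a0 y else c y) okP) // => y _.
rewrite /b2 /= mem_cat.
case yr: (y \in vleaves r); first by rewrite (negbTE (dj _ yr)) orbT.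
by rewrite orbF; case: (y \in vleaves l).
Qed.

Unset Implicit Arguments.

Theorem mainTheorem2 (R : realFieldType) (V Ed : finType) (ends : Ed -> {set V})
    (s d : V) (vt : vtree Ed) (P : psdd Ed R) :
  (forall e, #|ends e| = 2%N) -> injective ends -> s != d ->
  right_linear vt -> vtree_over vt -> psdd_ok vt P ->
  (forall a : Ed -> bool, peval a P <-> is_path_indicator ends s d a) ->
  (forall a : Ed -> bool, is_path_indicator ends s d a -> 0 < pprob a P) ->
  forall (es : seq (psdd Ed R * psdd Ed R * R)) (p sb : psdd Ed R) (th : R),
    sreached P (PDec es) -> List.In (p, sb, th) es -> 0 < th ->
    exists (e : Ed) (b : bool), p = PLit e b.
Proof.
move=> c2 inj _ rl /andP[uvt /allP allv] okP HP _ es p sb th hr Hin th0.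
have allv' : forall y, y \in vleaves vt by move=> y; apply: allv; rewrite mem_enum.
have [w [c [okw uw rlw Hw]]] := reach_ctx okP uvt rl allv' hr.
inversion okw; subst.
match goal with H : dec_ok _ |- _ => rename H into Hdec end.
match goal with H : forall t, List.In t _ -> psdd_ok _ _ /\ _ |- _ => rename H into Hch end.
move: (uw); rewrite /= cat_uniq => /and3P[ul /hasPn dj ur].
have [okp oks] := Hch _ Hin.
case: Hdec => [[Hcons _ _] [_ _ Hz]].
case: l rlw okp ul dj okw Hw uw Hch => [x|l1 l2] //= _ okp ul dj okw Hw uw Hch.
inversion okp; subst.
- by exists x, b.
- exfalso.
  have sbn : sb <> PBot by move=> h; have /= h0 := proj2 (Hz _ Hin) h; move: th0; rewrite h0 ltxx.
  have [b hb] := psdd_sat oks ur sbn.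
  pose bb (v : bool) := fun y => if y == x then v else b y.
  have hbb : forall v, peval (bb v) (PDec es).
    move=> v; rewrite peval_dec; eapply In_has; [exact Hin|]; apply/andP; split => //=.
    rewrite (peval_loc _ b oks) // => y yr; rewrite /bb.
    by move: (dj _ yr); rewrite mem_seq1 => /negbTE ->.
  pose m (v : bool) := fun y => if y \in x :: vleaves r then bb v y else c y.
  have hm : forall v, is_path_indicator ends s d (m v) by move=> v; apply/HP; exact: (Hw _ (hbb v)).
  apply: (no_flip inj x (c2 x) (hm true) (hm false)).
  + by rewrite /m /bb mem_head eqxx.
  + by rewrite /m /bb mem_head eqxx.
  + by move=> y ny; rewrite /m /bb (negbTE ny).
- by have [a0] := Hcons _ Hin.
Qed.
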